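(* Let $\lambda_y>0$ be fixed and let $\mathcal{C}\subseteq(0,\infty)$ be a convex set. For $\lambda_x\in\mathcal{C}$ define $\alpha(\lambda_x,\lambda_y)=\frac{\lambda_x}{\lambda_y}\left(1-e^{-\lambda_y}\right)$ and $\bar{p}_{\lambda_y}(\lambda_x)=1-\frac{1}{1+\alpha(\lambda_x,\lambda_y)}$. Let $U(a,b)$ be a real-valued function that is jointly concave in $(a,b)$ and nondecreasing in $a$ for every fixed $b$. Then the objective function $\lambda_x\mapsto U\big(\bar{p}_{\lambda_y}(\lambda_x),\lambda_x\big)$ of the optimization problem $\max_{\lambda_x\in\mathcal{C}} U\big(\bar{p}_{\lambda_y}(\lambda_x),\lambda_x\big)$ is concave in $\lambda_x$ on $\mathcal{C}$.
   Context: Here $\lambda_x$ is the Poisson arrival rate of ''fishing tasks'' and $\lambda_y$ the Poisson arrival rate of regular tasks; the optimization problem above is called OP1 in the paper, and the lemma asserts that OP1 is a concave maximization problem in $\lambda_x$. *)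

(* Defs.v *)
From Stdlib Require Import Reals.
Open Scope R_scope.

Definition convex_set (C : R -> Prop) : Prop :=
  forall x y t, C x -> C y -> 0 <= t <= 1 -> C (t * x + (1 - t) * y).

Definition concave_on (C : R -> Prop) (f : R -> R) : Prop :=
  forall x y t, C x -> C y -> 0 <= t <= 1 ->
    t * f x + (1 - t) * f y <= f (t * x + (1 - t) * y).

Definition jointly_concave (U : R -> R -> R) : Prop :=
  forall a1 b1 a2 b2 t, 0 <= t <= 1 ->
    t * U a1 b1 + (1 - t) * U a2 b2
      <= U (t * a1 + (1 - t) * a2) (t * b1 + (1 - t) * b2).

Definition nondecreasing_first (U : R -> R -> R) : Prop :=
  forall a a' b, a <= a' -> U a b <= U a' b.

Definition alpha (lx ly : R) : R := lx / ly * (1 - exp (- ly)).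

Definition pbar (ly lx : R) : R := 1 - 1 / (1 + alpha lx ly).

(* Main.v *)
Require Import Defs.
From Stdlib Require Import Reals Lra Psatz.
Open Scope R_scope.

Lemma conv_inv (a b t : R) : 0 < a -> 0 < b -> 0 <= t <= 1 ->
  1 / (t * a + (1 - t) * b) <= t * (1 / a) + (1 - t) * (1 / b).
Proof.
  intros Ha Hb Ht.
  assert (Hs : 0 < t * a + (1 - t) * b) by nra.
  assert (E : t * (1 / a) + (1 - t) * (1 / b) - 1 / (t * a + (1 - t) * b)
     = t * (1 - t) * ((a - b) * (a - b)) / (a * b * (t * a + (1 - t) * b))).
  { field; lra. }
  assert (0 <= t * (1 - t) * ((a - b) * (a - b)) / (a * b * (t * a + (1 - t) * b))).
  { unfold Rdiv. apply Rmult_le_pos.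
    - assert (0 <= t * (1 - t)) by nra. assert (0 <= (a - b) * (a - b)) by (pose proof (Rle_0_sqr (a - b)); unfold Rsqr in *; lra). nra.
    - left; apply Rinv_0_lt_compat; apply Rmult_lt_0_compat; [nra|lra]. }
  lra.
Qed.

Theorem lemma1 (ly : R) (C : R -> Prop) (U : R -> R -> R) :
  0 < ly ->
  (forall x, C x -> 0 < x) ->
  convex_set C ->
  jointly_concave U ->
  nondecreasing_first U ->
  concave_on C (fun lx => U (pbar ly lx) lx).
Proof.
  intros Hly Hpos Hconv HJ HN x y t Cx Cy Ht. simpl.
  set (k := / ly * (1 - exp (- ly))).
  assert (Hk : 0 < k).
  { unfold k. apply Rmult_lt_0_compat. apply Rinv_0_lt_compat; lra.
    assert (exp (- ly) < exp 0) by (apply exp_increasing; lra).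
    rewrite exp_0 in H; lra. }
  assert (Hp : forall z, pbar ly z = 1 - 1 / (1 + k * z)).
  { intro z. unfold pbar, alpha, k. unfold Rdiv. f_equal. f_equal. f_equal. ring. }
  assert (Hx := Hpos x Cx). assert (Hy := Hpos y Cy).
  assert (Hpb : t * pbar ly x + (1 - t) * pbar ly y <= pbar ly (t * x + (1 - t) * y)).
  { rewrite !Hp.
    pose proof (conv_inv (1 + k * x) (1 + k * y) t ltac:(nra) ltac:(nra) Ht) as H.
    replace (1 + k * (t * x + (1 - t) * y)) with (t * (1 + k * x) + (1 - t) * (1 + k * y)) by ring.
    lra. }
  eapply Rle_trans. apply HJ; exact Ht.
  apply HN. exact Hpb.
Qed.
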